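(* Let $1<p<\infty$. The space $h_p$ is not monotone, and so it is neither normal nor perfect.
   Context: Sequences are complex sequences indexed by positive integers, and $\Delta x_k=x_k-x_{k+1}$. For $1<p<\infty$, $$h_p=\Big\{x:\ \sum_{k=1}^{\infty}(k|\Delta x_k|)^p<\infty,\ \lim_k x_k=0\Big\}.$$ Let $\lambda$ be a sequence space. - $\lambda$ is perfect if $\lambda=\lambda^{\alpha\alpha}$, where $X^\alpha=\{a: (a_kx_k)\in\ell_1\ \forall x\in X\}$. - $\lambda$ is normal if $y\in\lambda$ whenever $|y_k|\le|x_k|$ for all $k$, for some $x\in\lambda$. - $\lambda$ is monotone if it contains the canonical preimages of all its step spaces, i.e. for every $x\in\lambda$ and every set $J$ of indices, the sequence equal to $x_k$ for $k\in J$ and $0$ otherwise belongs to $\lambda$. *)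

(* Defs.v *)
From Stdlib Require Import Reals.
From Coquelicot Require Import Coquelicot.
Open Scope R_scope.

(** Sequences are complex sequences; the paper's index k = 1,2,... is
    represented by the nat index n = k - 1 (so x n stands for x_{n+1}). *)
Definition cseq := nat -> C.

Definition rpow (a p : R) : R := if Rle_dec a 0 then 0 else Rpower a p.

Definition Delta (x : cseq) (n : nat) : C := Cminus (x n) (x (S n)).

Definition h_p (p : R) (x : cseq) : Prop :=
  ex_series (fun n => rpow (INR (S n) * Cmod (Delta x n)) p) /\
  filterlim x eventually (locally (0 : C)).

Definition alpha_dual (X : cseq -> Prop) (a : cseq) : Prop :=
  forall x, X x -> ex_series (fun n => Cmod (Cmult (a n) (x n))).

Definition perfect (X : cseq -> Prop) : Prop :=
  forall x, X x <-> alpha_dual (alpha_dual X) x.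

Definition normal (X : cseq -> Prop) : Prop :=
  forall x y, X x -> (forall n, Cmod (y n) <= Cmod (x n)) -> X y.

(** canonical preimage of the step space on the index set J *)
Definition restrict (J : nat -> bool) (x : cseq) : cseq :=
  fun n => if J n then x n else (0 : C).

Definition monotone (X : cseq -> Prop) : Prop :=
  forall x (J : nat -> bool), X x -> X (restrict J x).

(* Main.v *)
Require Import Defs.
From Stdlib Require Import Reals Lra Lia ZArith.
From Coquelicot Require Import Coquelicot.
Open Scope R_scope.

Lemma key (p : R) (hp : 1 < p) (n : nat) :
  (p - 1) * exp (- p * ln (INR n + 2)) <=
  exp ((1 - p) * ln (INR n + 1)) - exp ((1 - p) * ln (INR n + 2)).
Proof.
  assert (H0 : 0 <= INR n) by apply pos_INR.
  set (uu := ln (INR n + 1)). set (vv := ln (INR n + 2)).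
  assert (Eu : exp uu = INR n + 1) by (apply exp_ln; lra).
  assert (Ev : exp vv = INR n + 2) by (apply exp_ln; lra).
  assert (Hd : exp (- vv) <= vv - uu).
  { rewrite exp_Ropp, Ev.
    assert (E : exp (- (vv - uu)) = (INR n + 1) / (INR n + 2)).
    { replace (- (vv - uu)) with (uu + - vv) by ring.
      rewrite exp_plus, exp_Ropp, Eu, Ev. reflexivity. }
    pose proof (exp_ineq1_le (- (vv - uu))) as H. rewrite E in H.
    assert (E2 : / (INR n + 2) = 1 - (INR n + 1) / (INR n + 2)) by (field; lra).
    lra. }
  assert (E1 : exp ((1 - p) * uu) = exp ((1 - p) * vv) * exp ((p - 1) * (vv - uu))).
  { rewrite <- exp_plus. f_equal. ring. }
  assert (E2 : exp (- p * vv) = exp ((1 - p) * vv) * exp (- vv)).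
  { rewrite <- exp_plus. f_equal. ring. }
  rewrite E1, E2.
  pose proof (exp_ineq1_le ((p - 1) * (vv - uu))) as H.
  pose proof (exp_pos ((1 - p) * vv)) as Hp.
  assert (exp ((1 - p) * vv) * ((p-1) * exp (- vv)) <= exp ((1 - p) * vv) * ((p-1) * (vv - uu))).
  { apply Rmult_le_compat_l; [lra|]. apply Rmult_le_compat_l; lra. }
  assert (exp ((1 - p) * vv) * ((p-1) * (vv - uu)) <= exp ((1 - p) * vv) * (exp ((p - 1) * (vv - uu)) - 1)).
  { apply Rmult_le_compat_l; lra. }
  nra.
Qed.

Lemma pseries (p : R) (hp : 1 < p) :
  ex_series (fun n => exp (- p * ln (INR n + 2))).
Proof.
  set (g := fun n => exp ((1 - p) * ln (INR n + 1))).
  set (a := fun n => exp (- p * ln (INR n + 2))).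
  assert (Hk : forall n, (p - 1) * a n <= g n - g (S n)).
  { intro n. pose proof (key p hp n) as H. unfold g, a. rewrite S_INR.
    replace (INR n + 1 + 1) with (INR n + 2) by ring. exact H. }
  assert (Hs : forall N, (p - 1) * sum_f_R0 a N <= g 0%nat - g (S N)).
  { induction N as [|N IH]; simpl sum_f_R0.
    - pose proof (Hk 0%nat). lra.
    - pose proof (Hk (S N)). lra. }
  apply ex_series_Reals_1.
  apply growing_cv.
  - intro N. simpl. pose proof (exp_pos (- p * ln (INR (S N) + 2))). unfold a. lra.
  - exists (g 0%nat / (p - 1)). intros y [N ->].
    pose proof (Hs N). assert (0 < g (S N)) by apply exp_pos.
    apply Rmult_le_reg_l with (p - 1); [lra|].
    unfold Rdiv. field_simplify; lra.
Qed.

Definition xex : cseq := fun n => RtoC (/ (INR n + 1)).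

Lemma rpow_inv (n : nat) (p : R) :
  rpow (/ (INR n + 2)) p = exp (- p * ln (INR n + 2)).
Proof.
  pose proof (pos_INR n).
  unfold rpow. destruct (Rle_dec (/ (INR n + 2)) 0) as [H1|H1].
  - assert (0 < / (INR n + 2)) by (apply Rinv_0_lt_compat; lra). lra.
  - unfold Rpower. rewrite ln_Rinv by lra. f_equal. ring.
Qed.

Lemma xex_hp (p : R) (hp : 1 < p) : h_p p xex.
Proof.
  split.
  - apply ex_series_ext with (a := fun n => exp (- p * ln (INR n + 2))).
    2: apply pseries; exact hp.
    intro n. rewrite <- rpow_inv. f_equal.
    pose proof (pos_INR n).
    unfold Defs.Delta, xex. rewrite <- RtoC_minus, Cmod_R, S_INR.
    rewrite Rabs_pos_eq.
    + field. lra.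
    + replace (INR (S n)) with (INR n + 1) by (rewrite S_INR; ring).
      assert (/ (INR n + 1 + 1) <= / (INR n + 1)).
      { apply Rinv_le_contravar; lra. }
      lra.
  - apply filterlim_locally. intro e. unfold xex.
    destruct (archimed (/ e)) as [H1 _].
    assert (He := cond_pos e).
    assert (Hz : (0 <= up (/ e))%Z).
    { apply le_IZR. assert (0 < / e) by (apply Rinv_0_lt_compat; lra). simpl; lra. }
    exists (Z.to_nat (up (/ e))). intros n Hn.
    split; [| apply ball_center].
    unfold ball; simpl. unfold AbsRing_ball, abs, minus, plus, opp; simpl.
    apply le_INR in Hn. rewrite INR_IZR_INZ, Z2Nat.id in Hn by exact Hz.
    assert (0 < / e) by (apply Rinv_0_lt_compat; lra).
    assert (Hp : 0 < / (INR n + 1)) by (apply Rinv_0_lt_compat; lra).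
    rewrite Ropp_0, Rplus_0_r, Rabs_pos_eq by lra.
    rewrite <- (Rinv_inv e). apply Rinv_lt_contravar; [nra | lra].
Qed.

Lemma not_restrict (p : R) (hp : 1 < p) :
  ~ h_p p (restrict Nat.even xex).
Proof.
  intros [Hs _]. apply ex_series_lim_0 in Hs. apply is_lim_seq_Reals in Hs.
  destruct (Hs 1 Rlt_0_1) as [N HN].
  specialize (HN (2 * N)%nat). assert (2 * N >= N)%nat by lia.
  specialize (HN H).
  unfold Defs.Delta, restrict in HN.
  rewrite Nat.even_even in HN.
  replace (S (2 * N)) with (2 * N + 1)%nat in HN by lia.
  rewrite Nat.even_odd in HN.
  unfold xex in HN. rewrite <- RtoC_minus, Cmod_R in HN.
  pose proof (pos_INR (2 * N)).
  replace (INR (2 * N + 1) * Rabs (/ (INR (2 * N) + 1) - 0)) with 1 in HN.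
  - unfold rpow in HN. destruct (Rle_dec 1 0); [lra|].
    unfold Rpower in HN. rewrite ln_1, Rmult_0_r, exp_0 in HN.
    unfold Rdist in HN. rewrite Rminus_0_r, Rabs_R1 in HN. lra.
  - rewrite Rminus_0_r, Rabs_pos_eq, plus_INR.
    + simpl (INR 1). field. lra.
    + left. apply Rinv_0_lt_compat. lra.
Qed.

Lemma not_monotone (p : R) (hp : 1 < p) : ~ monotone (h_p p).
Proof.
  intro H. apply (not_restrict p hp). apply H. apply xex_hp. exact hp.
Qed.

Lemma normal_monotone (X : cseq -> Prop) : normal X -> monotone X.
Proof.
  intros H x J Hx. apply (H x); [exact Hx|].
  intro n. unfold restrict. destruct (J n).
  - apply Rle_refl.
  - rewrite Cmod_0. apply Cmod_ge_0.
Qed.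

Lemma perfect_normal (X : cseq -> Prop) : perfect X -> normal X.
Proof.
  intros H x y Hx Hy. apply H. apply H in Hx.
  intros a Ha. specialize (Hx a Ha).
  apply (@ex_series_le R_AbsRing R_CompleteNormedModule _ (fun n => Cmod (Cmult (x n) (a n)))); [|exact Hx].
  intro n. unfold norm; simpl. rewrite Rabs_pos_eq by apply Cmod_ge_0.
  rewrite !Cmod_mult. apply Rmult_le_compat_r; [apply Cmod_ge_0 | apply Hy].
Qed.

Theorem corollary3p11 (p : R) (hp : 1 < p) :
  ~ monotone (h_p p) /\ ~ normal (h_p p) /\ ~ perfect (h_p p).
Proof.
  pose proof (not_monotone p hp) as H.
  split; [exact H|]. split.
  - intro Hn. apply H. apply normal_monotone. exact Hn.
  - intro Hp. apply H. apply normal_monotone. apply perfect_normal. exact Hp.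
Qed.
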